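(* For $a,b>0$, with $D:=a\partial_a+b\partial_b$, $$\mathfrak H_{(0,0,0)}(a,b)=-[1,a,b]\log,\qquad \mathfrak H_{(0,1,0)}=-\partial_a\mathfrak H_{(0,0,0)},\qquad \mathfrak H_{(1,0,0)}=(D+2)\,\mathfrak H_{(0,0,0)},$$ $$\mathfrak H_{(2,0,0)}=\tfrac12(D+3)\,\mathfrak H_{(1,0,0)}=-\tfrac12(D+3)(D+2)[1,a,b]\log,\qquad \mathfrak H_{(1,1,0)}=-\partial_a\mathfrak H_{(1,0,0)}.$$
   Context: $\mathfrak H_\alpha(a,b):=\int_0^\infty x^{|\alpha|+1}(1+x)^{-\alpha_0-1}(1+ax)^{-\alpha_1-1}(1+bx)^{-\alpha_2-1}\,dx$ for $\alpha\in\mathbb N^3$, $a,b>0$, $|\alpha|=\alpha_0+\alpha_1+\alpha_2$. Divided differences: for $f$ smooth on an open interval, $[y_0]f=f(y_0)$, $[y_0,\dots,y_n]f=\int_{\{t\ge0,\sum t_j=1\}}f^{(n)}(\sum t_jy_j)\,dt_1\cdots dt_n$ (for distinct points $=\sum_kf(y_k)\prod_{j\ne k}(y_k-y_j)^{-1}$). *)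

(* Defs.v *)
From Stdlib Require Import Reals Lra Classical ClassicalEpsilon.
Open Scope R_scope.

(* A total choice of a value satisfying P (used to turn "the" derivative /
   "the" integral into functions; meaningful when the value exists uniquely). *)
Definition the_real (P : R -> Prop) : R := epsilon (inhabits 0) P.

Definition deriv (f : R -> R) (x : R) : R :=
  the_real (fun l => derivable_pt_lim f x l).

Definition pda (f : R -> R -> R) (a b : R) : R := deriv (fun x => f x b) a.
Definition pdb (f : R -> R -> R) (a b : R) : R := deriv (fun y => f a y) b.

Definition Dop (f : R -> R -> R) (a b : R) : R := a * pda f a b + b * pdb f a b.

Definition RInt (f : R -> R) (lo hi : R) : R :=
  the_real (fun l => exists pr : Riemann_integrable f lo hi, RiemannInt pr = l).

(* Divided difference [y0,y1,y2]f := integral over the simplex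
   {t1,t2 >= 0, t1 + t2 <= 1} of f''(t0 y0 + t1 y1 + t2 y2), t0 = 1 - t1 - t2. *)
Definition divdiff3 (f : R -> R) (y0 y1 y2 : R) : R :=
  RInt (fun t1 =>
          RInt (fun t2 => deriv (deriv f) ((1 - t1 - t2) * y0 + t1 * y1 + t2 * y2))
               0 (1 - t1))
       0 1.

Definition improper_int_0_inf (f : R -> R) (l : R) : Prop :=
  forall eps : R, eps > 0 -> exists M : R, forall T : R, T >= M ->
    exists pr : Riemann_integrable f 0 T, Rabs (RiemannInt pr - l) < eps.

Definition H_integrand (a0 a1 a2 : nat) (a b : R) (x : R) : R :=
  x ^ (a0 + a1 + a2 + 1)
  / ((1 + x) ^ (a0 + 1) * (1 + a * x) ^ (a1 + 1) * (1 + b * x) ^ (a2 + 1)).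

Definition H (a0 a1 a2 : nat) (a b : R) : R :=
  the_real (improper_int_0_inf (H_integrand a0 a1 a2 a b)).

Definition Glog (a b : R) : R := divdiff3 ln 1 a b.

Definition pdiff_a (f : R -> R -> R) (a b : R) : Prop :=
  exists l, derivable_pt_lim (fun x => f x b) a l.
Definition pdiff_b (f : R -> R -> R) (a b : R) : Prop :=
  exists l, derivable_pt_lim (fun y => f a y) b l.

(* Main.v *)
From Coquelicot Require Import Coquelicot.
From Stdlib Require Import Reals Lra Lia ClassicalEpsilon.
Require Import Defs.
Open Scope R_scope.

Lemma the_real_eq (P : R -> Prop) l : P l -> (forall l1 l2, P l1 -> P l2 -> l1 = l2) -> the_real P = l.
Proof.
  intros Hl Hu. unfold the_real. apply Hu; [|exact Hl].
  apply epsilon_spec. now exists l.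
Qed.

Lemma deriv_eq f x l : is_derive f x l -> deriv f x = l.
Proof.
  intros H. apply the_real_eq. now apply is_derive_Reals.
  intros l1 l2 H1 H2. eapply uniqueness_limite; eauto.
Qed.

Lemma DRInt_eq f a b : ex_RInt f a b -> Defs.RInt f a b = RInt.RInt f a b.
Proof.
  intros H. apply the_real_eq.
  exists (ex_RInt_Reals_0 _ _ _ H). now rewrite (RInt_Reals _ _ _ (ex_RInt_Reals_0 _ _ _ H)).
  intros l1 l2 [p1 <-] [p2 <-]. apply RiemannInt_P5.
Qed.

Lemma improper_unique f l1 l2 : improper_int_0_inf f l1 -> improper_int_0_inf f l2 -> l1 = l2.
Proof.
  intros H1 H2. apply Rminus_diag_uniq. apply Rabs_eq_0.
  destruct (Rle_lt_or_eq_dec 0 (Rabs (l1 - l2))) as [Hlt|Heq]; [apply Rabs_pos| |now symmetry].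
  exfalso. set (e := Rabs (l1 - l2) / 2).
  assert (He : e > 0) by (unfold e; lra).
  destruct (H1 e He) as [M1 HM1]. destruct (H2 e He) as [M2 HM2].
  destruct (HM1 (Rmax M1 M2)) as [p1 Hp1]. apply Rle_ge, Rmax_l.
  destruct (HM2 (Rmax M1 M2)) as [p2 Hp2]. apply Rle_ge, Rmax_r.
  rewrite (RiemannInt_P5 p2 p1) in Hp2.
  assert (Rabs (l1 - l2) <= Rabs (RiemannInt p1 - l1) + Rabs (RiemannInt p1 - l2)).
  { replace (l1 - l2) with (-(RiemannInt p1 - l1) + (RiemannInt p1 - l2)) by ring.
    eapply Rle_trans; [apply Rabs_triang|]. rewrite Rabs_Ropp. lra. }
  unfold e in *. lra.
Qed.

Lemma the_improper f l : improper_int_0_inf f l -> the_real (improper_int_0_inf f) = l.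
Proof. intros H. apply the_real_eq; auto. apply improper_unique. Qed.

Lemma loc_pos a : 0 < a -> locally a (fun x => 0 < x).
Proof.
  intros Ha. exists (mkposreal a Ha). intros y Hy. simpl in Hy.
  unfold ball in Hy; simpl in Hy; unfold AbsRing_ball, abs, minus, plus, opp in Hy; simpl in Hy.
  apply Rabs_def2 in Hy. lra.
Qed.

Definition kf (n p q : nat) (a b t : R) := t^n / ((1 + t*(a-1))^p * (1 + t*(b-1))^q).
Definition K n p q a b := RInt.RInt (kf n p q a b) 0 1.

Lemma alpha_pos t a : 0 <= t <= 1 -> 0 < a -> 0 < 1 + t*(a-1).
Proof. intros. nra. Qed.

Lemma kf_cont n p q a b t : 1 + t*(a-1) <> 0 -> 1 + t*(b-1) <> 0 -> continuous (kf n p q a b) t.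
Proof.
  intros H1 H2. apply (@ex_derive_continuous R_AbsRing R_NormedModule). unfold kf. auto_derive.
  apply Rmult_integral_contrapositive; split; apply pow_nonzero; auto.
Qed.

Lemma kf_ex n p q a b : 0 < a -> 0 < b -> ex_RInt (kf n p q a b) 0 1.
Proof.
  intros Ha Hb. apply (@ex_RInt_continuous R_CompleteNormedModule). intros z Hz.
  rewrite Rmin_left in Hz by lra. rewrite Rmax_right in Hz by lra.
  apply kf_cont; apply Rgt_not_eq, alpha_pos; auto.
Qed.

Lemma dkf n b u t : 1 + t*(u-1) <> 0 -> 1+t*(b-1) <> 0 ->
  is_derive (fun z => kf n 1 1 z b t) u (- kf (S n) 2 1 u b t).
Proof.
  intros H1 H2. unfold kf. auto_derive.
  - simpl. repeat split; try apply Rmult_integral_contrapositive; split; auto; lra.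
  - simpl. field. split; auto.
Qed.

Lemma c2_alpha x y : continuity_2d_pt (fun u v => 1 + v*(u-1)) x y.
Proof.
  apply continuity_2d_pt_plus. apply continuity_2d_pt_const.
  apply continuity_2d_pt_mult. apply continuity_2d_pt_id2.
  apply continuity_2d_pt_minus. apply continuity_2d_pt_id1. apply continuity_2d_pt_const.
Qed.

Lemma c2_beta b x y : continuity_2d_pt (fun u v => 1 + v*(b-1)) x y.
Proof.
  apply continuity_2d_pt_plus. apply continuity_2d_pt_const.
  apply continuity_2d_pt_mult. apply continuity_2d_pt_id2. apply continuity_2d_pt_const.
Qed.

Lemma c2_pow (g : R -> R -> R) k x y : continuity_2d_pt g x y -> continuity_2d_pt (fun u v => g u v ^ k) x y.
Proof.
  intros Hg. apply (continuity_1d_2d_pt_comp (fun z => z ^ k)); auto.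
  apply derivable_continuous_pt. apply derivable_pt_pow.
Qed.

Lemma dK_a n a b : 0 < a -> 0 < b -> is_derive (fun x => K n 1 1 x b) a (- K (S n) 2 1 a b).
Proof.
  intros Ha Hb.
  assert (Hd : is_derive (fun x => RInt.RInt (fun t => kf n 1 1 x b t) 0 1) a
     (RInt.RInt (fun t => Derive (fun u => kf n 1 1 u b t) a) 0 1)).
  { apply (is_derive_RInt_param (fun u t => kf n 1 1 u b t)).
    - apply (filter_imp (fun x => 0 < x)); [|apply loc_pos; auto].
      intros x Hx t Ht. rewrite Rmin_left in Ht by lra. rewrite Rmax_right in Ht by lra.
      eexists. apply dkf; apply Rgt_not_eq, alpha_pos; auto.
    - intros t Ht. rewrite Rmin_left in Ht by lra. rewrite Rmax_right in Ht by lra.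
      apply continuity_2d_pt_ext_loc with (f := fun u v => - kf (S n) 2 1 u b v).
      + assert (L1 := continuity_2d_pt_neq_0 _ a t (c2_alpha a t)).
        assert (L2 := continuity_2d_pt_neq_0 _ a t (c2_beta b a t)).
        specialize (L1 (Rgt_not_eq _ _ (alpha_pos t a Ht Ha))).
        specialize (L2 (Rgt_not_eq _ _ (alpha_pos t b Ht Hb))).
        apply locally_2d_impl with (2 := locally_2d_and _ _ _ _ L1 L2).
        apply locally_2d_forall. intros u v [H1 H2].
        symmetry. apply is_derive_unique. apply dkf; auto.
      + apply continuity_2d_pt_opp. unfold kf, Rdiv.
        apply continuity_2d_pt_mult. apply c2_pow, continuity_2d_pt_id2.
        apply continuity_2d_pt_inv.
        apply continuity_2d_pt_mult; apply c2_pow; [apply c2_alpha|apply c2_beta].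
        apply Rmult_integral_contrapositive; split; apply pow_nonzero;
          apply Rgt_not_eq, alpha_pos; auto.
    - apply (filter_imp (fun x => 0 < x)); [|apply loc_pos; auto].
      intros x Hx. apply kf_ex; auto. }
  replace (- K (S n) 2 1 a b) with (RInt.RInt (fun t => Derive (fun u => kf n 1 1 u b t) a) 0 1).
  exact Hd.
  unfold K. rewrite <- (RInt_opp (V:=R_CompleteNormedModule)) by (apply kf_ex; auto).
  apply RInt_ext. intros t Ht. rewrite Rmin_left in Ht by lra. rewrite Rmax_right in Ht by lra.
  apply is_derive_unique. apply dkf; apply Rgt_not_eq, alpha_pos; auto; lra.
Qed.

Lemma K_sym n p q a b : K n p q a b = K n q p b a.
Proof. unfold K. apply RInt_ext. intros. unfold kf. f_equal. ring. Qed.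

Lemma dK_b n a b : 0 < a -> 0 < b -> is_derive (fun y => K n 1 1 a y) b (- K (S n) 1 2 a b).
Proof.
  intros Ha Hb. rewrite K_sym.
  eapply is_derive_ext; [|apply dK_a; auto]. intros y. simpl. apply K_sym.
Qed.

Lemma IBP n a b : 0 < a -> 0 < b ->
  INR (S n) * K n 1 1 a b - INR n * K (S n) 1 1 a b - a * K (S n) 2 1 a b - b * K (S n) 1 2 a b = 0.
Proof.
  intros Ha Hb.
  set (F := fun t => t^(S n) * (1 - t) / ((1 + t*(a-1)) * (1 + t*(b-1)))).
  assert (H1 : is_RInt (fun t => INR (S n) * kf n 1 1 a b t - INR n * kf (S n) 1 1 a b t
                 - a * kf (S n) 2 1 a b t - b * kf (S n) 1 2 a b t) 0 1 (minus (F 1) (F 0))).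
  { apply (@is_RInt_derive R_CompleteNormedModule).
    - intros t Ht. rewrite Rmin_left in Ht by lra. rewrite Rmax_right in Ht by lra.
      assert (P1 := alpha_pos t a Ht Ha). assert (P2 := alpha_pos t b Ht Hb).
      unfold F, kf. auto_derive.
      + apply Rmult_integral_contrapositive; split; lra.
      + replace (match n with 0%nat => 1 | S _ => INR n + 1 end) with (INR n + 1)
          by (destruct n; simpl; ring).
        rewrite S_INR. cbn [pow]. field. split; lra.
    - intros t Ht. rewrite Rmin_left in Ht by lra. rewrite Rmax_right in Ht by lra.
      assert (P1 := alpha_pos t a Ht Ha). assert (P2 := alpha_pos t b Ht Hb).
      apply (@ex_derive_continuous R_AbsRing R_NormedModule). unfold kf. auto_derive.
      simpl. repeat split; apply Rmult_integral_contrapositive; split; try lra;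
        apply Rmult_integral_contrapositive; split; lra. }
  assert (H2 : is_RInt (fun t => INR (S n) * kf n 1 1 a b t - INR n * kf (S n) 1 1 a b t
                 - a * kf (S n) 2 1 a b t - b * kf (S n) 1 2 a b t) 0 1
      (INR (S n) * K n 1 1 a b - INR n * K (S n) 1 1 a b - a * K (S n) 2 1 a b - b * K (S n) 1 2 a b)).
  { unfold K.
    apply (@is_RInt_minus R_NormedModule); [apply (@is_RInt_minus R_NormedModule); [apply (@is_RInt_minus R_NormedModule)|]|];
    apply (@is_RInt_scal R_NormedModule); apply (RInt_correct (V:=R_CompleteNormedModule)); apply kf_ex; auto. }
  rewrite <- (is_RInt_unique _ _ _ _ H2). rewrite (is_RInt_unique _ _ _ _ H1).
  unfold F, minus, plus, opp; simpl. field. lra.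
Qed.

Lemma d2ln y : 0 < y -> deriv (deriv ln) y = - / (y * y).
Proof.
  intros Hy. apply deriv_eq.
  apply (is_derive_ext_loc (fun z => / z)).
  - apply (filter_imp (fun x => 0 < x)); [|apply loc_pos; auto].
    intros z Hz. symmetry. apply deriv_eq. apply is_derive_Reals. apply derivable_pt_lim_ln; auto.
  - auto_derive. lra. field. lra.
Qed.

Lemma conv_pos a b t1 s : 0 < a -> 0 < b -> 0 <= t1 -> 0 <= s -> t1 + s <= 1 ->
  0 < (1 - t1 - s) * 1 + t1 * a + s * b.
Proof.
  intros Ha Hb H1 H2 H3.
  set (m := Rmin 1 (Rmin a b)).
  assert (0 < m) by (unfold m; repeat apply Rmin_glb_lt; lra).
  assert (m <= 1) by apply Rmin_l.
  assert (m <= a) by (unfold m; eapply Rle_trans; [apply Rmin_r|apply Rmin_l]).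
  assert (m <= b) by (unfold m; eapply Rle_trans; [apply Rmin_r|apply Rmin_r]).
  nra.
Qed.

Lemma inner_val a b t1 : 0 < a -> 0 < b -> 0 <= t1 <= 1 ->
  Defs.RInt (fun t2 => deriv (deriv ln) ((1 - t1 - t2) * 1 + t1 * a + t2 * b)) 0 (1 - t1)
  = - (1 - t1) / ((1 + t1*(a-1)) * (a*t1 + b*(1-t1))).
Proof.
  intros Ha Hb Ht.
  set (h := fun t2 => - / (((1 - t1 - t2) * 1 + t1 * a + t2 * b) * ((1 - t1 - t2) * 1 + t1 * a + t2 * b))).
  set (c := 1 + t1*(a-1)).
  assert (Hc : 0 < c) by (unfold c; nra).
  assert (Hh : is_RInt h 0 (1 - t1) (minus (- (1-t1) / (c * ((1 - t1 - (1-t1)) * 1 + t1 * a + (1-t1) * b))) (- 0 / (c * ((1 - t1 - 0) * 1 + t1 * a + 0 * b))))).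
  { apply (@is_RInt_derive R_CompleteNormedModule (fun s => - s / (c * ((1 - t1 - s) * 1 + t1 * a + s * b)))).
    - intros s Hs. rewrite Rmin_left in Hs by lra. rewrite Rmax_right in Hs by lra.
      assert (0 < (1 - t1 - s) * 1 + t1 * a + s * b) by (apply conv_pos; lra).
      auto_derive. apply Rmult_integral_contrapositive; split; lra.
      unfold h, c; simpl. field. split; [lra|]. change (c <> 0). lra.
    - intros s Hs. rewrite Rmin_left in Hs by lra. rewrite Rmax_right in Hs by lra.
      assert (0 < (1 - t1 - s) * 1 + t1 * a + s * b) by (apply conv_pos; lra).
      apply (@ex_derive_continuous R_AbsRing R_NormedModule). unfold h. auto_derive.
      apply Rmult_integral_contrapositive; split; lra. }
  assert (Heq : forall x, Rmin 0 (1-t1) < x < Rmax 0 (1-t1) ->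
     h x = deriv (deriv ln) ((1 - t1 - x) * 1 + t1 * a + x * b)).
  { intros x Hx. rewrite Rmin_left in Hx by lra. rewrite Rmax_right in Hx by lra.
    rewrite d2ln. reflexivity. apply conv_pos; lra. }
  rewrite DRInt_eq.
  - rewrite <- (RInt_ext _ _ _ _ Heq). rewrite (is_RInt_unique _ _ _ _ Hh).
    unfold minus, plus, opp; simpl. unfold c. field.
    assert (HH := conv_pos a b t1 (1-t1) Ha Hb ltac:(lra) ltac:(lra) ltac:(lra)). split; [lra|]. change (c <> 0); lra.
  - eapply ex_RInt_ext; [exact Heq|]. eexists; exact Hh.
Qed.

Lemma G_eq a b : 0 < a -> 0 < b -> Glog a b = - K 1 1 1 a b.
Proof.
  intros Ha Hb. unfold Glog, divdiff3.
  set (o := fun t1 => - (1 - t1) / ((1 + t1*(a-1)) * (a*t1 + b*(1-t1)))).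
  assert (Heq : forall x, Rmin 0 1 < x < Rmax 0 1 -> o x =
    Defs.RInt (fun t2 => deriv (deriv ln) ((1 - x - t2) * 1 + x * a + t2 * b)) 0 (1 - x)).
  { intros x Hx. rewrite Rmin_left in Hx by lra. rewrite Rmax_right in Hx by lra.
    rewrite inner_val; auto. lra. }
  assert (Hpos : forall x, 0 <= x <= 1 -> 0 < 1 + x*(a-1) /\ 0 < a*x + b*(1-x)).
  { intros x Hx. split. apply alpha_pos; auto.
    assert (HH := conv_pos a b x (1-x) Ha Hb ltac:(lra) ltac:(lra) ltac:(lra)). lra. }
  assert (Ho : ex_RInt o 0 1).
  { apply (@ex_RInt_continuous R_CompleteNormedModule). intros z Hz.
    rewrite Rmin_left in Hz by lra. rewrite Rmax_right in Hz by lra.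
    destruct (Hpos z Hz).
    apply (@ex_derive_continuous R_AbsRing R_NormedModule). unfold o. auto_derive.
    apply Rmult_integral_contrapositive; split; lra. }
  rewrite DRInt_eq; [| eapply ex_RInt_ext; [exact Heq|exact Ho]].
  rewrite <- (RInt_ext _ _ _ _ Heq).
  set (g := fun t => (1 - t) / (1 + t*(a-1))).
  set (dg := fun t => - a / ((1 + t*(a-1)) * (1 + t*(a-1)))).
  assert (E1 : RInt.RInt o 0 1 = RInt.RInt (fun y => scal (dg y) (kf 1 1 1 a b (g y))) 0 1).
  { apply RInt_ext. intros x Hx. rewrite Rmin_left in Hx by lra. rewrite Rmax_right in Hx by lra.
    destruct (Hpos x ltac:(lra)).
    unfold o, dg, g, kf, scal; simpl; unfold mult; simpl. field.
    repeat split; try lra. }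
  rewrite E1. rewrite (@RInt_comp R_CompleteNormedModule).
  - replace (g 0) with 1 by (unfold g; field).
    replace (g 1) with 0 by (unfold g; field; lra).
    rewrite <- (@opp_RInt_swap R_CompleteNormedModule). reflexivity. apply kf_ex; auto.
  - intros x Hx. rewrite Rmin_left in Hx by lra. rewrite Rmax_right in Hx by lra.
    destruct (Hpos x Hx).
    assert (0 <= g x <= 1). { unfold g. split. apply Rdiv_le_0_compat; lra.
      unfold Rdiv; apply Rmult_le_reg_r with (1 + x*(a-1)); [lra|]; rewrite Rmult_assoc, Rinv_l, Rmult_1_r by lra; nra. }
    apply kf_cont; apply Rgt_not_eq, alpha_pos; auto.
  - intros x Hx. rewrite Rmin_left in Hx by lra. rewrite Rmax_right in Hx by lra.
    destruct (Hpos x Hx). split.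
    + unfold g, dg. auto_derive. lra. field. lra.
    + apply (@ex_derive_continuous R_AbsRing R_NormedModule). unfold dg. auto_derive.
      apply Rmult_integral_contrapositive; split; lra.
Qed.

Lemma kf_ex_sub n p q a b u v : 0 < a -> 0 < b -> 0 <= u -> u <= v -> v <= 1 ->
  ex_RInt (kf n p q a b) u v.
Proof.
  intros Ha Hb H1 H2 H3. apply (@ex_RInt_continuous R_CompleteNormedModule). intros z Hz.
  rewrite Rmin_left in Hz by lra. rewrite Rmax_right in Hz by lra.
  apply kf_cont; apply Rgt_not_eq, alpha_pos; auto; lra.
Qed.

Lemma kf_bound n p q a b : 0 < a -> 0 < b -> exists B, 0 < B /\ forall t, 0 <= t <= 1 -> Rabs (kf n p q a b t) <= B.
Proof.
  intros Ha Hb.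
  destruct (continuity_ab_maj (fun t => Rabs (kf n p q a b t)) 0 1) as [c [Hc _]].
  lra.
  { intros c Hc. apply (continuity_pt_comp (kf n p q a b) Rabs).
    apply continuity_pt_filterlim. apply kf_cont; apply Rgt_not_eq, alpha_pos; auto.
    apply Rcontinuity_abs. }
  exists (Rabs (kf n p q a b c) + 1). split. assert (HH := Rabs_pos (kf n p q a b c)). lra.
  intros t Ht. specialize (Hc t Ht). simpl in Hc. lra.
Qed.

Lemma improper_of n p q a b f : 0 < a -> 0 < b ->
  (forall x, 0 <= x -> f x = / ((1 + x) * (1 + x)) * kf n p q a b (x / (1 + x))) ->
  (forall T, 0 <= T -> ex_RInt f 0 T) ->
  improper_int_0_inf f (K n p q a b).
Proof.
  intros Ha Hb Hid Hex.
  assert (Hval : forall T, 0 <= T -> RInt.RInt f 0 T = RInt.RInt (kf n p q a b) 0 (T / (1 + T))).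
  { intros T HT.
    rewrite (RInt_ext f (fun y => scal (/ ((1 + y) * (1 + y))) (kf n p q a b (y / (1 + y))))).
    2:{ intros x Hx. rewrite Rmin_left in Hx by lra. rewrite Rmax_right in Hx by lra.
        apply Hid; lra. }
    rewrite (@RInt_comp R_CompleteNormedModule _ (fun y => y / (1 + y))).
    - replace (0 / (1 + 0)) with 0 by field. reflexivity.
    - intros x Hx. rewrite Rmin_left in Hx by lra. rewrite Rmax_right in Hx by lra.
      assert (0 <= x / (1 + x) <= 1).
      { split. apply Rdiv_le_0_compat; lra.
        unfold Rdiv; apply Rmult_le_reg_r with (1 + x); [lra|];
          rewrite Rmult_assoc, Rinv_l, Rmult_1_r by lra; lra. }
      apply kf_cont; apply Rgt_not_eq, alpha_pos; auto.
    - intros x Hx. rewrite Rmin_left in Hx by lra. rewrite Rmax_right in Hx by lra.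
      split.
      + auto_derive. lra. field. lra.
      + apply (@ex_derive_continuous R_AbsRing R_NormedModule). auto_derive.
        apply Rmult_integral_contrapositive; split; lra. }
  destruct (kf_bound n p q a b Ha Hb) as [B [HB HBb]].
  intros eps Heps. exists (B / eps). intros T HT.
  assert (HT0 : 0 <= T). { apply Rge_le in HT. eapply Rle_trans; [|exact HT].
    apply Rlt_le, Rdiv_lt_0_compat; lra. }
  exists (ex_RInt_Reals_0 _ _ _ (Hex T HT0)).
  rewrite <- RInt_Reals. rewrite Hval by auto.
  assert (Hy : 0 <= T / (1 + T) <= 1).
  { split. apply Rdiv_le_0_compat; lra.
    unfold Rdiv; apply Rmult_le_reg_r with (1 + T); [lra|];
      rewrite Rmult_assoc, Rinv_l, Rmult_1_r by lra; lra. }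
  unfold K. rewrite <- (@RInt_Chasles R_CompleteNormedModule _ 0 (T / (1 + T)) 1)
    by (apply kf_ex_sub; auto; lra).
  unfold plus; simpl.
  replace (RInt.RInt (kf n p q a b) 0 (T / (1 + T)) -
    (RInt.RInt (kf n p q a b) 0 (T / (1 + T)) + RInt.RInt (kf n p q a b) (T / (1 + T)) 1))
    with (- RInt.RInt (kf n p q a b) (T / (1 + T)) 1) by ring.
  rewrite Rabs_Ropp.
  eapply Rle_lt_trans. apply abs_RInt_le_const with (M := B). lra.
  apply kf_ex_sub; auto; lra.
  intros t Ht. apply HBb. lra.
  replace (1 - T / (1 + T)) with (/ (1 + T)) by (field; lra).
  apply Rge_le in HT.
  assert (B < eps * (1 + T)).
  { unfold Rdiv in HT. apply Rmult_le_compat_l with (r := eps) in HT; [|lra].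
    rewrite <- Rmult_assoc, (Rmult_comm eps B), Rmult_assoc, Rinv_r, Rmult_1_r in HT by lra. lra. }
  apply Rmult_lt_reg_l with (1 + T). lra.
  replace ((1 + T) * (/ (1 + T) * B)) with B by (field; lra). lra.
Qed.

Lemma Hint_ex n0 n1 n2 a b : 0 < a -> 0 < b -> forall T, 0 <= T -> ex_RInt (H_integrand n0 n1 n2 a b) 0 T.
Proof.
  intros Ha Hb T HT. apply (@ex_RInt_continuous R_CompleteNormedModule). intros z Hz.
  rewrite Rmin_left in Hz by lra. rewrite Rmax_right in Hz by lra.
  apply (@ex_derive_continuous R_AbsRing R_NormedModule). unfold H_integrand. auto_derive.
  assert (0 < 1 + a * z) by nra; assert (0 < 1 + b * z) by nra.
  repeat match goal with |- _ * _ <> 0 => apply Rmult_integral_contrapositive; split | |- _ ^ _ <> 0 => apply pow_nonzero end; lra.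
Qed.

Ltac hid a b := intros x Hx; unfold H_integrand, kf; simpl;
  assert (0 < 1 + a * x) by nra; assert (0 < 1 + b * x) by nra; field; repeat split; nra.

Lemma H000 a b : 0 < a -> 0 < b -> improper_int_0_inf (H_integrand 0 0 0 a b) (K 1 1 1 a b).
Proof. intros Ha Hb. apply improper_of; auto. hid a b. apply Hint_ex; auto. Qed.
Lemma H010 a b : 0 < a -> 0 < b -> improper_int_0_inf (H_integrand 0 1 0 a b) (K 2 2 1 a b).
Proof. intros Ha Hb. apply improper_of; auto. hid a b. apply Hint_ex; auto. Qed.
Lemma H100 a b : 0 < a -> 0 < b -> improper_int_0_inf (H_integrand 1 0 0 a b) (K 2 1 1 a b).
Proof. intros Ha Hb. apply improper_of; auto. hid a b. apply Hint_ex; auto. Qed.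
Lemma H200 a b : 0 < a -> 0 < b -> improper_int_0_inf (H_integrand 2 0 0 a b) (K 3 1 1 a b).
Proof. intros Ha Hb. apply improper_of; auto. hid a b. apply Hint_ex; auto. Qed.
Lemma H110 a b : 0 < a -> 0 < b -> improper_int_0_inf (H_integrand 1 1 0 a b) (K 3 2 1 a b).
Proof. intros Ha Hb. apply improper_of; auto. hid a b. apply Hint_ex; auto. Qed.

Lemma pda_loc (F : R -> R -> R) a b (G : R -> R) l : 0 < a -> (forall x, 0 < x -> F x b = G x) ->
  is_derive G a l -> pdiff_a F a b /\ pda F a b = l.
Proof.
  intros Ha HF HG.
  assert (Hd : is_derive (fun x => F x b) a l).
  { apply (is_derive_ext_loc G); auto.
    apply (filter_imp (fun x => 0 < x)); [|apply loc_pos; auto]. intros; symmetry; auto. }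
  split. exists l. now apply is_derive_Reals. unfold pda. now apply deriv_eq.
Qed.

Lemma pdb_loc (F : R -> R -> R) a b (G : R -> R) l : 0 < b -> (forall y, 0 < y -> F a y = G y) ->
  is_derive G b l -> pdiff_b F a b /\ pdb F a b = l.
Proof.
  intros Ha HF HG.
  assert (Hd : is_derive (fun y => F a y) b l).
  { apply (is_derive_ext_loc G); auto.
    apply (filter_imp (fun x => 0 < x)); [|apply loc_pos; auto]. intros; symmetry; auto. }
  split. exists l. now apply is_derive_Reals. unfold pdb. now apply deriv_eq.
Qed.

Lemma HK000 a b : 0 < a -> 0 < b -> H 0 0 0 a b = K 1 1 1 a b.
Proof. intros Ha Hb. unfold H. apply the_improper, H000; auto. Qed.
Lemma HK010 a b : 0 < a -> 0 < b -> H 0 1 0 a b = K 2 2 1 a b.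
Proof. intros Ha Hb. unfold H. apply the_improper, H010; auto. Qed.
Lemma HK100 a b : 0 < a -> 0 < b -> H 1 0 0 a b = K 2 1 1 a b.
Proof. intros Ha Hb. unfold H. apply the_improper, H100; auto. Qed.
Lemma HK200 a b : 0 < a -> 0 < b -> H 2 0 0 a b = K 3 1 1 a b.
Proof. intros Ha Hb. unfold H. apply the_improper, H200; auto. Qed.
Lemma HK110 a b : 0 < a -> 0 < b -> H 1 1 0 a b = K 3 2 1 a b.
Proof. intros Ha Hb. unfold H. apply the_improper, H110; auto. Qed.

Lemma pdaG a b : 0 < a -> 0 < b -> pdiff_a Glog a b /\ pda Glog a b = K 2 2 1 a b.
Proof.
  intros Ha Hb. apply (pda_loc _ a b (fun x => - K 1 1 1 x b)); auto.
  intros; apply G_eq; auto.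
  rewrite <- (Ropp_involutive (K 2 2 1 a b)). apply (@is_derive_opp R_AbsRing R_NormedModule). apply dK_a; auto.
Qed.

Lemma pdbG a b : 0 < a -> 0 < b -> pdiff_b Glog a b /\ pdb Glog a b = K 2 1 2 a b.
Proof.
  intros Ha Hb. apply (pdb_loc _ a b (fun y => - K 1 1 1 a y)); auto.
  intros; apply G_eq; auto.
  rewrite <- (Ropp_involutive (K 2 1 2 a b)). apply (@is_derive_opp R_AbsRing R_NormedModule). apply dK_b; auto.
Qed.

Lemma Phi_eq x y : 0 < x -> 0 < y -> Dop Glog x y + 2 * Glog x y = - K 2 1 1 x y.
Proof.
  intros Hx Hy. unfold Dop. rewrite (proj2 (pdaG x y Hx Hy)), (proj2 (pdbG x y Hx Hy)), G_eq by auto.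
  assert (I := IBP 1 x y Hx Hy). simpl INR in I. lra.
Qed.

Theorem mainTheorem17 : forall a b : R, 0 < a -> 0 < b ->
  (exists l, improper_int_0_inf (H_integrand 0 0 0 a b) l) /\
  (exists l, improper_int_0_inf (H_integrand 0 1 0 a b) l) /\
  (exists l, improper_int_0_inf (H_integrand 1 0 0 a b) l) /\
  (exists l, improper_int_0_inf (H_integrand 2 0 0 a b) l) /\
  (exists l, improper_int_0_inf (H_integrand 1 1 0 a b) l) /\
  H 0 0 0 a b = - Glog a b /\
  pdiff_a (H 0 0 0) a b /\ H 0 1 0 a b = - pda (H 0 0 0) a b /\
  pdiff_b (H 0 0 0) a b /\
  H 1 0 0 a b = Dop (H 0 0 0) a b + 2 * H 0 0 0 a b /\
  pdiff_a (H 1 0 0) a b /\ pdiff_b (H 1 0 0) a b /\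
  H 2 0 0 a b = / 2 * (Dop (H 1 0 0) a b + 3 * H 1 0 0 a b) /\
  pdiff_a Glog a b /\ pdiff_b Glog a b /\
  pdiff_a (fun a' b' => Dop Glog a' b' + 2 * Glog a' b') a b /\
  pdiff_b (fun a' b' => Dop Glog a' b' + 2 * Glog a' b') a b /\
  H 2 0 0 a b =
    - / 2 * (Dop (fun a' b' => Dop Glog a' b' + 2 * Glog a' b') a b
             + 3 * (Dop Glog a b + 2 * Glog a b)) /\
  H 1 1 0 a b = - pda (H 1 0 0) a b.
Proof.
  intros a b Ha Hb.
  destruct (pda_loc (H 0 0 0) a b (fun x => K 1 1 1 x b) _ Ha (fun x Hx => HK000 x b Hx Hb) (dK_a 1 a b Ha Hb)) as [PA0 DA0].
  destruct (pdb_loc (H 0 0 0) a b (fun y => K 1 1 1 a y) _ Hb (fun y Hy => HK000 a y Ha Hy) (dK_b 1 a b Ha Hb)) as [PB0 DB0].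
  destruct (pda_loc (H 1 0 0) a b (fun x => K 2 1 1 x b) _ Ha (fun x Hx => HK100 x b Hx Hb) (dK_a 2 a b Ha Hb)) as [PA1 DA1].
  destruct (pdb_loc (H 1 0 0) a b (fun y => K 2 1 1 a y) _ Hb (fun y Hy => HK100 a y Ha Hy) (dK_b 2 a b Ha Hb)) as [PB1 DB1].
  assert (dPa : is_derive (fun x => - K 2 1 1 x b) a (K 3 2 1 a b)).
  { rewrite <- (Ropp_involutive (K 3 2 1 a b)). apply (@is_derive_opp R_AbsRing R_NormedModule). apply dK_a; auto. }
  assert (dPb : is_derive (fun y => - K 2 1 1 a y) b (K 3 1 2 a b)).
  { rewrite <- (Ropp_involutive (K 3 1 2 a b)). apply (@is_derive_opp R_AbsRing R_NormedModule). apply dK_b; auto. }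
  destruct (pda_loc (fun a' b' => Dop Glog a' b' + 2 * Glog a' b') a b _ _ Ha (fun x Hx => Phi_eq x b Hx Hb) dPa) as [PAP DAP].
  destruct (pdb_loc (fun a' b' => Dop Glog a' b' + 2 * Glog a' b') a b _ _ Hb (fun y Hy => Phi_eq a y Ha Hy) dPb) as [PBP DBP].
  destruct (pdaG a b Ha Hb) as [PAG _]. destruct (pdbG a b Ha Hb) as [PBG _].
  assert (I1 := IBP 1 a b Ha Hb). assert (I2 := IBP 2 a b Ha Hb). simpl INR in I1, I2.
  assert (Ph := Phi_eq a b Ha Hb).
  unfold Dop in *.
  rewrite ?DA0, ?DB0, ?DA1, ?DB1, ?DAP, ?DBP.
  rewrite (HK000 a b Ha Hb), (HK010 a b Ha Hb), (HK100 a b Ha Hb), (HK200 a b Ha Hb), (HK110 a b Ha Hb), (G_eq a b Ha Hb).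
  rewrite (G_eq a b Ha Hb) in Ph.
  repeat split; auto;
  try (eexists; first [apply H000|apply H010|apply H100|apply H200|apply H110]; auto; fail);
  try lra.
Qed.
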